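(* Let $p$ be a prime number and $k,N$ positive integers. Suppose that integers $n,m\geq N$ satisfy $n\equiv m\pmod{\varphi(p^N)}$. Then \[ C^{(-k)}_{n}\equiv C^{(-k)}_{m}\pmod{p^N}. \]
   Context: For any integer $k$, let $\mathrm{Li}_k(t)=\sum_{n=1}^{\infty} t^n/n^k$. The poly-Bernoulli numbers of type $C$, $C^{(k)}_n$ ($n\ge0$), are defined by $\frac{\mathrm{Li}_k(1-e^{-t})}{e^{t}-1}=\sum_{n=0}^{\infty}C^{(k)}_n\frac{t^n}{n!}$. For negative upper index these are integers. $\varphi$ denotes Euler's totient function, so $\varphi(p^N)=p^{N-1}(p-1)$. *)

(* Defs.v *)
From HB Require Import structures.
From mathcomp Require Import all_boot all_order all_algebra.
Set Implicit Arguments. Unset Strict Implicit. Unset Printing Implicit Defensive.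
Import Order.TTheory GRing.Theory Num.Theory.
Local Open Scope ring_scope.

Definition fps := nat -> rat.

Definition fps_one : fps := fun n => (n == 0%N)%:R.

Definition fps_mul (f g : fps) : fps :=
  fun n => \sum_(i < n.+1) f i * g (n - i)%N.

Fixpoint fps_pow (f : fps) (j : nat) : fps :=
  match j with
  | 0%N => fps_one
  | j'.+1 => fps_mul f (fps_pow f j')
  end.

Definition fps_exp : fps := fun n => (n`!%:R)^-1.
Definition fps_expneg : fps := fun n => (-1) ^+ n / n`!%:R.

Definition one_minus_expneg : fps := fun n => fps_one n - fps_expneg n.

Definition expm1 : fps := fun n => fps_exp n - fps_one n.

(* Li_k(f) = sum_{j>=1} f^j / j^k, for a series f with zero constant term
   (then f^j has no terms of degree < j, so the coefficient of t^n only
   involves j <= n). Here k is any integer. *)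
Definition Li_comp (k : int) (f : fps) : fps :=
  fun n => \sum_(1 <= j < n.+1) ((j%:R : rat) ^ (- k)) * fps_pow f j n.

(* Quotient f / g of series when g has zero constant term and g 1 <> 0
   (and f 0 = 0): q is the unique series with q * g = f, computed by
   q_n = (f_{n+1} - sum_{i<n} q_i g_{n+1-i}) / g_1.
   div_v1_seq f g n is the list [q_0; ...; q_n]. *)
Fixpoint div_v1_seq (f g : fps) (n : nat) : seq rat :=
  match n with
  | 0%N => [:: f 1%N / g 1%N]
  | n'.+1 =>
      let s := div_v1_seq f g n' in
      rcons s ((f n.+1 - \sum_(i < n) s`_i * g (n.+1 - i)%N) / g 1%N)
  end.

Definition fps_div_v1 (f g : fps) : fps := fun n => nth 0 (div_v1_seq f g n) n.

Definition polyBernC (k : int) (n : nat) : rat :=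
  n`!%:R * fps_div_v1 (Li_comp k one_minus_expneg) expm1 n.

(* Main.v *)
Require Import Defs.
From HB Require Import structures.
From mathcomp Require Import all_boot all_order all_algebra cyclic zify ring.
From Stdlib Require Import FunctionalExtensionality.
Import Order.TTheory GRing.Theory Num.Theory.
Local Open Scope ring_scope.

Definition E (a : rat) : fps := fun n => a ^+ n / n`!%:R.
Definition trunc (N : nat) (f : fps) : {poly rat} := \poly_(i < N.+1) f i.

Lemma mul_trunc f g N n : (n <= N)%N -> fps_mul f g n = (trunc N f * trunc N g)`_n.
Proof.
move=> hn; rewrite coefM /fps_mul; apply: eq_bigr => i _.
rewrite !coef_poly.
have hi : (i < N.+1)%N by rewrite ltnS (leq_trans _ hn) // -ltnS.
have hi' : (n - i < N.+1)%N by rewrite ltnS (leq_trans (leq_subr _ _) hn).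
by rewrite hi hi'.
Qed.

Lemma coefM_eqr (A B C : {poly rat}) n :
  (forall i, (i <= n)%N -> A`_i = B`_i) -> (C * A)`_n = (C * B)`_n.
Proof. by move=> h; rewrite !coefM; apply: eq_bigr => i _; rewrite h // leq_subr. Qed.

Lemma fps_mulC f g : fps_mul f g = fps_mul g f.
Proof.
apply: functional_extensionality => n.
by rewrite (@mul_trunc f _ n n (leqnn n)) (@mul_trunc g f n n (leqnn n)) mulrC.
Qed.

Lemma trunc_mul f g N n : (n <= N)%N ->
  (trunc N (fps_mul f g))`_n = (trunc N f * trunc N g)`_n.
Proof. by move=> hn; rewrite coef_poly ltnS hn; exact: mul_trunc. Qed.

Lemma fps_mulA f g h : fps_mul f (fps_mul g h) = fps_mul (fps_mul f g) h.
Proof.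
apply: functional_extensionality => n.
rewrite (@mul_trunc f _ n n (leqnn n)) (@mul_trunc _ h n n (leqnn n)).
rewrite (@coefM_eqr (trunc n (fps_mul g h)) (trunc n g * trunc n h));
  last by move=> i hi; exact: trunc_mul.
rewrite [trunc n (fps_mul f g) * _]mulrC (@coefM_eqr (trunc n (fps_mul f g)) (trunc n f * trunc n g));
  last by move=> i hi; exact: trunc_mul.
by rewrite [trunc n h * _]mulrC mulrA.
Qed.

Lemma fps_mul_sum (I : Type) (r : seq I) (P : pred I) (F : I -> fps) h :
  fps_mul (fun n => \sum_(x <- r | P x) F x n) h =
  (fun n => \sum_(x <- r | P x) fps_mul (F x) h n).
Proof.
apply: functional_extensionality => n; rewrite /fps_mul.
under eq_bigr => i _ do rewrite mulr_suml.
by rewrite exchange_big.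
Qed.

Lemma fps_mul_sub f g h :
  fps_mul (fun n => f n - g n) h = (fun n => fps_mul f h n - fps_mul g h n).
Proof.
apply: functional_extensionality => n; rewrite /fps_mul -sumrB.
by apply: eq_bigr => i _; rewrite mulrBl.
Qed.

Lemma fps_mul_scale c f h :
  fps_mul (fun n => c * f n) h = (fun n => c * fps_mul f h n).
Proof.
apply: functional_extensionality => n; rewrite /fps_mul mulr_sumr.
by apply: eq_bigr => i _; rewrite mulrA.
Qed.

Lemma fps_mul1 f : fps_mul fps_one f = f.
Proof.
apply: functional_extensionality => n; rewrite /fps_mul big_ord_recl /= subn0 mul1r.
by rewrite big1 ?addr0 // => i _; rewrite mul0r.
Qed.

Lemma fact_neq0 n : (n`!%:R : rat) != 0.
Proof. by rewrite pnatr_eq0 -lt0n fact_gt0. Qed.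

Lemma E_mul a b : fps_mul (E a) (E b) = E (a + b).
Proof.
apply: functional_extensionality => n; rewrite /fps_mul /E addrC exprDn mulr_suml.
apply: eq_bigr => i _.
have hi : (i <= n)%N by rewrite -ltnS.
have hf := bin_fact hi.
have e : (n`!%:R : rat) = 'C(n, i)%:R * (i`!%:R * (n - i)`!%:R) by rewrite -!natrM hf.
rewrite e -mulr_natr.
have h1 := fact_neq0 i; have h2 := fact_neq0 (n - i).
have h3 : ('C(n, i)%:R : rat) != 0 by rewrite pnatr_eq0 -lt0n bin_gt0.
by field; rewrite h1 h2 h3.
Qed.

Lemma E0 : E 0 = fps_one.
Proof.
apply: functional_extensionality => n; rewrite /E /fps_one expr0n.
by case: n => [|n] //=; rewrite ?mul0r // divr1.
Qed.

Definition ordr (f : fps) (a : nat) := forall i, (i < a)%N -> f i = 0.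

Lemma ord_mul f g a b : ordr f a -> ordr g b -> ordr (fps_mul f g) (a + b).
Proof.
move=> hf hg n hn; rewrite /fps_mul big1 // => i _.
case: (ltnP i a) => hia; first by rewrite hf // mul0r.
rewrite hg ?mulr0 //. move: hia hn (ltn_ord i); move: (nat_of_ord i) => k; lia.
Qed.

Notation X := one_minus_expneg.

Lemma X0 : X 0%N = 0.
Proof. by rewrite /one_minus_expneg /fps_one /fps_expneg /= expr0 divr1 subrr. Qed.

Definition Xp (j : nat) : fps := fps_pow X j.

Lemma ord_Xp j : ordr (Xp j) j.
Proof.
elim: j => [|j IH]; first by move=> i.
have h1 : ordr X 1 by move=> i; rewrite ltnS leqn0 => /eqP ->; exact: X0.
have := @ord_mul _ _ _ _ h1 IH; by rewrite add1n.
Qed.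

Definition Sig (a : nat -> rat) (F : nat -> fps) : fps :=
  fun n => \sum_(j < n.+1) a j * F j n.

Definition ordF (F : nat -> fps) := forall j, ordr (F j) j.

Lemma Sig_ext a F M n : ordF F -> (n < M)%N ->
  Sig a F n = \sum_(j < M) a j * F j n.
Proof.
move=> hF hM; rewrite /Sig -!(big_mkord xpredT (fun j => a j * F j n)).
rewrite (@big_cat_nat _ _ _ n.+1 0 M _ _ (leq0n n.+1) hM) /=.
rewrite [X in _ + X]big1_seq ?addr0 // => j /andP[_].
by rewrite mem_index_iota => /andP[hj _]; rewrite (hF j n hj) mulr0.
Qed.

Lemma Sig_mul h a F : ordF F ->
  fps_mul h (Sig a F) = Sig a (fun j => fps_mul h (F j)).
Proof.
move=> hF; apply: functional_extensionality => n; rewrite {1}/fps_mul.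
under eq_bigr => i _ do rewrite (@Sig_ext a F n.+1) ?ltnS ?leq_subr // mulr_sumr.
rewrite exchange_big /= /Sig; apply: eq_bigr => j _.
by rewrite /fps_mul mulr_sumr; apply: eq_bigr => i _; rewrite mulrCA.
Qed.

Lemma Sig_shift a F : ordF F ->
  Sig a (fun j => F j.+1) = Sig (fun j => if j is j'.+1 then a j' else 0) F.
Proof.
move=> hF; apply: functional_extensionality => n; rewrite /Sig.
rewrite big_ord_recr /= (hF n.+1 n (ltnSn n)) mulr0 addr0.
by rewrite big_ord_recl /= mul0r add0r.
Qed.

Lemma Sig_sub a b F n : Sig (fun j => a j - b j) F n = Sig a F n - Sig b F n.
Proof. by rewrite /Sig -sumrB; apply: eq_bigr => j _; rewrite mulrBl. Qed.

Lemma Sig_sum K c b F n :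
  Sig (fun j => \sum_(l < K) c l * b l j) F n = \sum_(l < K) c l * Sig (b l) F n.
Proof.
rewrite /Sig; under eq_bigr => j _ do rewrite mulr_suml.
rewrite exchange_big; apply: eq_bigr => l _; rewrite mulr_sumr.
by apply: eq_bigr => j _; rewrite mulrA.
Qed.

Lemma Sig_eq a b F : (forall j, a j = b j) -> Sig a F = Sig b F.
Proof.
move=> h; apply: functional_extensionality => n.
by apply: eq_bigr => j _; rewrite h.
Qed.

Lemma Sig_delta0 F n : Sig (fun j => (j == 0)%N%:R) F n = F 0%N n.
Proof.
rewrite /Sig big_ord_recl /= mul1r big1 ?addr0 // => j _.
by rewrite /= mul0r.
Qed.

Definition T (l : nat) : fps := Sig (fun j => 'C(j, l)%:R) Xp.

Lemma Em1 : fps_expneg = E (-1).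
Proof. by []. Qed.

Lemma Em1_X f : fps_mul (E (-1)) f = (fun n => f n - fps_mul X f n).
Proof.
have -> : E (-1) = (fun n => fps_one n - X n).
  by apply: functional_extensionality => n; rewrite /one_minus_expneg opprB addrC subrK.
by rewrite fps_mul_sub fps_mul1.
Qed.

Lemma XT l : fps_mul X (T l) =
  Sig (fun j => if j is j'.+1 then 'C(j', l)%:R else 0) Xp.
Proof.
rewrite /T Sig_mul; last exact: ord_Xp.
transitivity (Sig (fun j => 'C(j, l)%:R) (fun j => Xp j.+1)); first by [].
exact: (Sig_shift (fun j => 'C(j, l)%:R) Xp ord_Xp).
Qed.

Lemma Em1_T0 : fps_mul (E (-1)) (T 0) = fps_one.
Proof.
rewrite Em1_X XT; apply: functional_extensionality => n.
rewrite /T -Sig_sub.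
rewrite (Sig_eq _ (fun j => (j == 0)%N%:R)); last by case=> [|j] //=; rewrite !bin0 subrr.
by rewrite Sig_delta0.
Qed.

Lemma Em1_TS l : fps_mul (E (-1)) (T l.+1) = fps_mul X (T l).
Proof.
rewrite Em1_X !XT; apply: functional_extensionality => n.
rewrite /T -Sig_sub; congr (Sig _ _ n); apply: functional_extensionality.
by case=> [|j] /=; rewrite ?bin0n ?subrr // binS natrD addrAC subrr add0r.
Qed.

Lemma E1_Em1 f : fps_mul (E 1) (fps_mul (E (-1)) f) = f.
Proof. by rewrite fps_mulA E_mul subrr E0 fps_mul1. Qed.

Lemma E1X : fps_mul (E 1) X = expm1.
Proof.
apply: functional_extensionality => n.
have -> : X = (fun n => E 0 n - E (-1) n) by rewrite E0.
rewrite fps_mulC fps_mul_sub !(fps_mulC _ (E 1)) !E_mul addr0 subrr E0.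
by rewrite /expm1 /fps_exp /E expr1n mul1r.
Qed.

Lemma T0 : T 0 = E 1.
Proof. by rewrite -(E1_Em1 (T 0)) Em1_T0 fps_mulC fps_mul1. Qed.

Lemma TS l : T l.+1 = fps_mul expm1 (T l).
Proof. by rewrite -(E1_Em1 (T l.+1)) Em1_TS fps_mulA E1X. Qed.

Fixpoint dd (k l : nat) : nat :=
  match k with 0%N => (l == 0%N) : nat | k'.+1 => l * (dd k' l + dd k' l.-1) end.

Lemma dd_big k l : (k < l)%N -> dd k l = 0%N.
Proof.
elim: k l => [|k IH] [|l] //= h.
rewrite !IH //; lia.
Qed.

Lemma pow_dd k j : (j ^ k = \sum_(l < k.+1) dd k l * 'C(j, l))%N.
Proof.
elim: k => [|k IH]; first by rewrite big_ord1 /= bin0.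
have key l : (j * 'C(j, l) = l * 'C(j, l) + l.+1 * 'C(j, l.+1))%N.
  rewrite mul_bin_left -mulnDl; case: (leqP l j) => h; first by rewrite subnKC.
  by rewrite bin_small // !muln0.
rewrite expnS IH big_distrr /=.
under eq_bigr => l _ do rewrite mulnCA key mulnDr.
rewrite big_split /=.
have -> : (\sum_(l < k.+2) dd k.+1 l * 'C(j, l) =
    \sum_(l < k.+2) l * dd k l * 'C(j, l) + \sum_(l < k.+2) l * dd k l.-1 * 'C(j, l))%N.
  by rewrite -big_split; apply: eq_bigr => l _ /=; rewrite -mulnDl mulnDr.
congr (_ + _)%N.
  rewrite [in RHS]big_ord_recr /= dd_big ?ltnSn // muln0 mul0n addn0.
  by apply: eq_bigr => l _; rewrite mulnCA mulnA.
rewrite big_ord_recl /= mul0n add0n; apply: eq_bigr => l _.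
by rewrite /bump /= mulnCA mulnA.
Qed.

Lemma Li_T k n : (0 < k)%N ->
  Li_comp (- (k%:Z)) X n = \sum_(l < k) (dd k l.+1)%:R * T l.+1 n.
Proof.
move=> hk.
have -> : Li_comp (- (k%:Z)) X n = Sig (fun j => j%:R ^+ k) Xp n.
  rewrite /Li_comp /Sig -(big_mkord xpredT (fun j => (j%:R : rat) ^+ k * Xp j n)).
  rewrite big_ltn // expr0n /=.
  case: k hk => // k _ /=; rewrite mul0r add0r.
  by apply: eq_bigr => j _; rewrite opprK.
rewrite (Sig_eq _ (fun j => \sum_(l < k.+1) (dd k l)%:R * 'C(j, l)%:R)); last first.
  by move=> j; rewrite -natrX pow_dd natr_sum; apply: eq_bigr => l _; rewrite natrM.
rewrite Sig_sum big_ord_recl /=.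
case: k hk => // k _ /=; rewrite mul0n mul0r add0r.
by apply: eq_bigr.
Qed.

Definition q (k : nat) : fps := fun n => \sum_(l < k) (dd k l.+1)%:R * T l n.

Lemma qg k n : fps_mul (q k) expm1 n = \sum_(l < k) (dd k l.+1)%:R * T l.+1 n.
Proof.
rewrite /fps_mul /q; under eq_bigr => i _ do rewrite mulr_suml.
rewrite exchange_big /=; apply: eq_bigr => l _.
rewrite TS fps_mulC /fps_mul mulr_sumr; apply: eq_bigr => i _.
by rewrite mulrA.
Qed.

Lemma div_seq_eq f g h : g 0%N = 0 -> g 1%N = 1 ->
  (forall n, fps_mul h g n.+1 = f n.+1) -> forall n, div_v1_seq f g n = mkseq h n.+1.
Proof.
move=> g0 g1 hq; elim=> [|n IH].
  rewrite /= g1 divr1 -hq /fps_mul big_ord_recr /= big_ord1 /= g0 g1 mulr0 addr0 mulr1.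
  by [].
rewrite [div_v1_seq f g n.+1]/= IH [mkseq h n.+2]mkseqS; congr (rcons _ _).
rewrite g1 divr1 -hq /fps_mul big_ord_recr /= big_ord_recr /= subnn g0 mulr0 addr0.
rewrite subSnn g1 mulr1.
have -> : \sum_(i < n.+1) (mkseq h n.+1)`_i * g (n.+2 - i)%N =
          \sum_(i < n.+1) h i * g (n.+2 - i)%N.
  by apply: eq_bigr => i _; rewrite nth_mkseq.
by rewrite addrAC subrr add0r.
Qed.

Lemma polyBernC_q k n : (0 < k)%N -> polyBernC (- (k%:Z)) n = n`!%:R * q k n.
Proof.
move=> hk; rewrite /polyBernC /fps_div_v1.
have g0 : expm1 0%N = 0 by rewrite /expm1 /fps_exp /fps_one /= invr1 subrr.
have g1 : expm1 1%N = 1 by rewrite /expm1 /fps_exp /fps_one /= invr1 subr0.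
rewrite (@div_seq_eq _ _ (q k) g0 g1) ?nth_mkseq //.
by move=> m; rewrite qg Li_T.
Qed.

Definition EPs (s : seq (int * nat)) : fps :=
  fun n => \sum_(x <- s) x.1%:~R * E (x.2)%:R n.

Definition EP (f : fps) := exists s, forall n, f n = EPs s n.

Lemma EPs_E1 s : fps_mul (E 1) (EPs s) = EPs [seq (x.1, x.2.+1) | x <- s].
Proof.
apply: functional_extensionality => n.
rewrite fps_mulC /fps_mul /EPs big_map.
rewrite (eq_bigr _ (fun i _ => mulr_suml _ _ _ _)) exchange_big /=; apply: eq_bigr => x _.
under eq_bigr => i _ do rewrite -mulrA.
rewrite -mulr_sumr; congr (_ * _).
by have := congr1 (fun f => f n) (E_mul (x.2)%:R 1); rewrite natr1.
Qed.

Lemma EP_T l : EP (T l).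
Proof.
elim: l => [|l [s hs]].
  exists [:: (1%:Z, 1%N)] => n; rewrite T0 /EPs big_seq1 /=.
  by rewrite mul1r.
have hT : T l = EPs s by apply: functional_extensionality.
exists ([seq (x.1, x.2.+1) | x <- s] ++ [seq (- x.1, x.2) | x <- s]) => n.
rewrite TS hT.
have -> : expm1 = (fun n => E 1 n - E 0 n).
  by apply: functional_extensionality => m; rewrite E0 /expm1 /fps_exp /E expr1n mul1r.
rewrite fps_mul_sub E0 fps_mul1 EPs_E1 /EPs big_cat /= big_map.
rewrite big_map; congr (_ + _); rewrite -sumrN; apply: eq_bigr => x _.
by rewrite intrN mulNr.
Qed.

Lemma EP_q k : EP (q k).
Proof.
rewrite /q; elim: k (dd k) => [|k IH] c.
  by exists [::] => n; rewrite big_ord0 /EPs big_nil.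
have [s hs] := IH c.
have [t ht] := EP_T k.
exists (s ++ [seq (x.1 * (c k.+1)%:Z, x.2) | x <- t]) => n.
rewrite big_ord_recr /= hs ht /EPs big_cat big_map /=; congr (_ + _).
rewrite mulr_sumr; apply: eq_bigr => x _.
by rewrite intrM mulrA [_ * x.1%:~R]mulrC.
Qed.

Lemma EPs_fact s n : n`!%:R * EPs s n = \sum_(x <- s) x.1%:~R * (x.2)%:R ^+ n.
Proof.
rewrite /EPs mulr_sumr; apply: eq_bigr => x _.
rewrite /E mulrCA; congr (_ * _).
by rewrite mulrCA mulfV ?mulr1 // fact_neq0.
Qed.

Lemma sum_cong (s : seq (int * nat)) (P n m : nat) :
  (forall a : nat, exists z : int, (a%:R : rat) ^+ n - a%:R ^+ m = P%:R * z%:~R) ->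
  exists z : int, (\sum_(x <- s) x.1%:~R * (x.2)%:R ^+ n - \sum_(x <- s) x.1%:~R * (x.2)%:R ^+ m : rat)
    = P%:R * z%:~R.
Proof.
move=> h; elim: s => [|x s [z hz]].
  by exists 0; rewrite !big_nil subrr mulr0.
have [za hza] := h x.2.
exists (x.1 * za + z); rewrite !big_cons intrD intrM.
by rewrite opprD addrACA -mulrBr hz hza; ring.
Qed.

Local Close Scope ring_scope.
Lemma pow_cong (p N n m a : nat) : prime p -> (N <= n)%N -> (N <= m)%N ->
  n = m %[mod totient (p ^ N)] -> a ^ n = a ^ m %[mod p ^ N].
Proof.
move=> pp hn hm hnm.
case: (boolP (p %| a)) => hpa.
  have h k : (N <= k)%N -> a ^ k %% p ^ N = 0.
    move=> hk; apply/eqP; rewrite -/(dvdn _ _).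
    apply: (dvdn_trans (dvdn_exp2r N hpa)); exact: dvdn_exp2l.
  by rewrite !h.
have cop : coprime a (p ^ N).
  by apply: coprimeXr; rewrite coprime_sym prime_coprime.
have E := Euler_exp_totient cop.
set t := totient (p ^ N) in E hnm *.
have h k : a ^ k = a ^ (k %% t) %[mod p ^ N].
  rewrite {1}(divn_eq k t) expnD (mulnC (k %/ t) t) expnM -modnMml -modnXm E modnXm exp1n.
  by rewrite modnMml mul1n.
by rewrite h hnm -h.
Qed.

Local Open Scope ring_scope.
Lemma cong_int (P x y : nat) : x = y %[mod P] -> exists z : int, (x%:R : rat) - y%:R = P%:R * z%:~R.
Proof.
move=> h; exists ((x %/ P)%:Z - (y %/ P)%:Z).
rewrite {1}(divn_eq x P) {1}(divn_eq y P) h !natrD !natrM intrB.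
rewrite !pmulrn; ring.
Qed.

Local Open Scope ring_scope.

Theorem theorem2p5 (p k N n m : nat) :
  prime p -> (0 < k)%N -> (0 < N)%N -> (N <= n)%N -> (N <= m)%N ->
  n = m %[mod totient (p ^ N)] ->
  exists z : int,
    polyBernC (- (k%:Z)) n - polyBernC (- (k%:Z)) m = (p ^ N)%:R * z%:~R.
Proof.
move=> pp hk hN hn hm hnm.
have [s hs] := EP_q k.
rewrite !polyBernC_q // !hs !EPs_fact.
apply: sum_cong => a.
rewrite -!natrX; apply: cong_int; exact: pow_cong pp hn hm hnm.
Qed.
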